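(* Let $n\geq 4$ and let $\pi\in S(\mathbb{Z}_n)$ satisfy $t([\pi])=n-2$. Then $\pi$ is a strong complete mapping, i.e. both $x\mapsto \pi(x)-x$ and $x\mapsto \pi(x)+x$ are permutations of $\mathbb{Z}_n$.
   Context: $S(\mathbb{Z}_n)$ is the set of bijections $\mathbb{Z}_n\to\mathbb{Z}_n$. For $\pi\in S(\mathbb{Z}_n)$, $\mathrm{cyc}(\pi)$ is the number of cycles (including fixed points) of $\pi$, $t(\pi)=n-\mathrm{cyc}(\pi)$, $[\pi]=\{x\mapsto \pi(x+b): b\in\mathbb{Z}_n\}$ and $t([\pi])=\min_{\sigma\in[\pi]}t(\sigma)$. *)

(* Defs.v *)
From HB Require Import structures.
From mathcomp Require Import all_boot all_order all_algebra all_fingroup.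
Set Implicit Arguments. Unset Strict Implicit. Unset Printing Implicit Defensive.
Import GRing.Theory.
Local Open Scope ring_scope.

(* Z_n is modelled by 'Z_n (valid for n >= 2; the theorem assumes n >= 4).
   S(Z_n) is {perm 'Z_n}. *)

Definition cyc (n : nat) (p : {perm 'Z_n}) : nat := #|porbits p|.

Definition tperm (n : nat) (p : {perm 'Z_n}) : nat := (n - cyc p)%N.

Definition transl (n : nat) (b : 'Z_n) : {perm 'Z_n} := perm (@addIr _ b).

Definition shiftp (n : nat) (p : {perm 'Z_n}) (b : 'Z_n) : {perm 'Z_n} :=
  (transl b * p)%g.

Lemma shiftpE n (p : {perm 'Z_n}) b x : shiftp p b x = p (x + b).
Proof. by rewrite /shiftp permM /transl permE. Qed.

(* t([pi]) = min over b of t(x |-> pi(x+b)); the default value n of the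
   iterated min is harmless since tperm _ <= n always. *)
Definition tclass (n : nat) (p : {perm 'Z_n}) : nat :=
  \big[minn/n]_(b : 'Z_n) tperm (shiftp p b).

(* Main.v *)
Require Import Defs.
From HB Require Import structures.
From mathcomp Require Import all_boot all_order all_algebra all_fingroup.
From mathcomp Require Import zify ring.
Import GRing.Theory.
Local Open Scope ring_scope.

Lemma porbit_closed (T : finType) (s : {perm T}) (A : {set T}) z y :
  (forall x, x \in A -> s x \in A) -> z \in A -> y \in porbit s z -> y \in A.
Proof.
move=> HA zA /porbitP [i ->]; elim: i => [|i IH]; first by rewrite expg0 perm1.
by rewrite expgSr permM; apply: HA.
Qed.

Lemma three_orbits (T : finType) (s : {perm T}) a b c :
  b \notin porbit s a -> c \notin porbit s a -> c \notin porbit s b ->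
  (3 <= #|porbits s|)%N.
Proof.
move=> ba ca cb.
have sub : [set porbit s a; porbit s b; porbit s c] \subset porbits s.
  apply/subsetP => X; rewrite !inE => /orP [/orP [] | ] /eqP ->;
  by apply/imsetP; eexists.
apply: leq_trans (subset_leq_card sub).
rewrite setUC cardsU1 cards2 !inE.
have -> : (porbit s c == porbit s b) = false.
  by apply/negP => /eqP E; move: cb; rewrite -E porbit_id.
have -> : (porbit s a == porbit s b) = false.
  by apply/negP => /eqP E; move: ba; rewrite E porbit_id.
have -> : (porbit s c == porbit s a) = false.
  by apply/negP => /eqP E; move: ca; rewrite -E porbit_id.
by [].
Qed.

Lemma notin_set1_orbit (T : finType) (s : {perm T}) z y :
  s z = z -> y != z -> y \notin porbit s z.
Proof.
move=> fz yz; apply/negP => /(@porbit_closed _ s [set z]) H.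
have : y \in [set z] by apply: H => [x|]; rewrite !inE // => /eqP ->; rewrite fz.
by rewrite inE (negbTE yz).
Qed.

Lemma exists_other (T : finType) (a b c : T) : (3 < #|T|)%N ->
  exists d, [&& d != a, d != b & d != c].
Proof.
move=> H; apply/existsP; apply: contraLR H => /existsPn Hn.
rewrite -leqNgt; apply: leq_trans (_ : #|[set a; b; c]| <= 3)%N.
  apply: subset_leq_card; apply/subsetP => d _.
  move: (Hn d); rewrite !inE; by case: (d == a); case: (d == b); case: (d == c).
rewrite setUC cardsU1 cards2; by case: (c \notin _); case: (a != b).
Qed.

Lemma bigminn_le (I : finType) (x : nat) (F : I -> nat) j :
  (\big[minn/x]_i F i <= F j)%N.
Proof.
have : j \in index_enum I by rewrite mem_index_enum.
elim: (index_enum I) => [|i r IH] //; rewrite big_cons inE => /orP [/eqP <-|/IH H].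
  exact: geq_minl.
by rewrite geq_min H orbT.
Qed.

Lemma cyc3_contra n (p : {perm 'Z_n}) b :
  (4 <= n)%N -> tclass p = (n - 2)%N -> (3 <= cyc (shiftp p b))%N -> False.
Proof.
move=> n4 Ht H3.
have : (tclass p <= Defs.tperm (shiftp p b))%N.
  exact: bigminn_le.
rewrite Ht /Defs.tperm; move: H3; rewrite /cyc.
move: #|_| => k; lia.
Qed.

Theorem proposition2p6 (n : nat) (p : {perm 'Z_n}) :
  (4 <= n)%N -> tclass p = (n - 2)%N ->
  injective (fun x : 'Z_n => p x - x) /\ injective (fun x : 'Z_n => p x + x).
Proof.
move=> n4 Ht.
have cardZ : #|'Z_n| = n by rewrite card_ord Zp_cast //; lia.
have cardT : (3 < #|'Z_n|)%N by rewrite cardZ.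
have H1 : injective (fun x : 'Z_n => p x - x).
  move=> x y /= Exy; apply/eqP; apply/negP => /negP nxy; exfalso.
  set s := shiftp p (x - p x).
  have fx : s (p x) = p x by rewrite /s shiftpE addrC subrK.
  have fy : s (p y) = p y.
    rewrite /s shiftpE; congr (p _).
    by rewrite -(opprB (p x) x) Exy opprB addrC subrK.
  have pxy : p y != p x by rewrite (inj_eq perm_inj) eq_sym.
  have [d /and3P [d1 d2 _]] := @exists_other _ (p x) (p y) (p x) cardT.
  apply: (@cyc3_contra n p (x - p x) n4 Ht).
  apply: (@three_orbits _ _ (p x) (p y) d); apply: notin_set1_orbit => //.
split => //.
move=> x y /= Exy; apply/eqP; apply/negP => /negP nxy; exfalso.
set s := shiftp p (y - p x).
have sx : s (p x) = p y by rewrite /s shiftpE addrC subrK.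
have sy : s (p y) = p x.
  rewrite /s shiftpE; congr (p _).
  by rewrite addrA -Exy addrAC subrr add0r.
have pxy : p y != p x by rewrite (inj_eq perm_inj) eq_sym.
have /codomP [w Hw] : (p x - y) \in codom (fun x : 'Z_n => p x - x).
  by apply: inj_card_onto.
have fw : s (p w) = p w.
  rewrite /s shiftpE; congr (p _).
  have -> : p w = p x - y + w by move: Hw => /= ->; rewrite subrK.
  ring.
have wx : p x != p w.
  by apply/eqP => E; move: fw; rewrite -E sx; apply/eqP; rewrite pxy.
have wy : p y != p w.
  by apply/eqP => E; move: fw; rewrite -E sy; apply/eqP; rewrite eq_sym pxy.
have [d /and3P [d1 d2 d3]] := @exists_other _ (p x) (p y) (p w) cardT.
apply: (@cyc3_contra n p (y - p x) n4 Ht).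
apply: (@three_orbits _ _ (p w) (p x) d).
- exact: notin_set1_orbit.
- exact: notin_set1_orbit.
apply/negP => /(@porbit_closed _ s [set p x; p y]) H.
have : d \in [set p x; p y].
  apply: H; last by rewrite !inE eqxx.
  by move=> z; rewrite !inE => /orP [] /eqP ->; rewrite ?sx ?sy eqxx ?orbT.
by rewrite !inE (negbTE d1) (negbTE d2).
Qed.
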